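(* Let $H$ be a Hamiltonian on $\mathbb{H}_\mathcal{S}$, $|\Psi\rangle\in\mathbb{H}_\mathcal{S}$ a unit vector, $\beta\ge0$, $\varepsilon\ge0$, and $S_r=\{\Delta\beta_l>0\}_{l\in[r]}$ with $\sum_{l=1}^r\Delta\beta_l=\beta$. Set $\beta_0:=0$, $\beta_l:=\sum_{k=1}^l\Delta\beta_k$, and $p_\Psi(b):=\|F_b(H)|\Psi\rangle\|^2$. For each $l\in[r]$ let $P_l$ be a $(\Delta\beta_l,\varepsilon'_l,\alpha_l)$-QITE-primitive for $H$ with $\alpha_l>0$ and $$\varepsilon'_l\le\begin{cases}\dfrac{\varepsilon\prod_{k=1}^r\alpha_k}{2\cdot4^{r-1}}\sqrt{p_\Psi(\beta)}, & l=1,\\[2mm] \dfrac{\varepsilon\prod_{k=l}^r\alpha_k}{4^{r-l+1}}\sqrt{\dfrac{p_\Psi(\beta)}{p_\Psi(\beta_{l-1})}}, & l>1.\end{cases}$$ Then the fragmented QITE algorithm is a $(\beta,\mathcal{O}(\varepsilon))$-master-QITE-algorithm for $H$ on $|\Psi\rangle$, with average query complexity $$Q_{S_r}(\beta,\varepsilon)=\sum_{l=1}^r n_l\,q(\Delta\beta_l,\varepsilon'_l,\alpha_l),\qquad n_l:=\frac{p_\Psi(\beta_{l-1})}{p_\Psi(\beta)\prod_{k=l}^r\alpha_k^2},$$ where $n_l$ is the average number of times $P_l$ is run and $q(\Delta\beta_l,\varepsilon'_l,\alpha_l)$ is the query complexity of $P_l$.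
   Context: $F_b(H):=e^{-b(H-\lambda_{\min}\mathbb{1})}$ with $\lambda_{\min}$ the smallest eigenvalue of $H$ ($\|H\|\le1$). A unitary $U$ on $\mathbb{H}_\mathcal{S}\otimes\mathbb{H}_\mathcal{A}$ is an $(\varepsilon,\alpha)$-block-encoding of $A$ if $\|\alpha A-\langle0|U|0\rangle\|\le\varepsilon$; a $(b,\varepsilon',\alpha)$-QITE-primitive of query complexity $q$ is a circuit making $q$ oracle calls that generates an $(\varepsilon',\alpha)$-block-encoding of $F_b(H)$; applying it to $|\phi\rangle|0\rangle$ and measuring the ancillas in the computational basis, outcome $|0\rangle$ (''success'') leaves the system in $\langle0|U|0\rangle|\phi\rangle$ normalized. A $(\beta,\varepsilon)$-master-QITE-algorithm for $H$ on $|\Psi\rangle$ is a procedure using such primitives that outputs $F_\beta(H)|\Psi\rangle/\|F_\beta(H)|\Psi\rangle\|$ up to trace-distance error $\varepsilon$ with unit probability; its query complexity is the sum of the query complexities of all primitives applied. The fragmented QITE algorithm: set $l=1$, prepare the system in $|\Psi\rangle$ and ancillas in $|0\rangle$; while $l\le r$: apply $P_l$, measure the ancillas in the computational basis; if the outcome is $|0\rangle$ set $l\to l+1$, otherwise restart from scratch (fresh preparation of $|\Psi\rangle$, $l=1$).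
   Formalization: O(ε) means at most a fixed constant times ε, for ε below a fixed positive bound, and $n_l$ and $Q_{S_r}(\beta,\varepsilon)$ match the average number of runs of $P_l$ and the average query complexity only within relative error O(ε). Each condition added here is assumed in the paper as well or is needed for the statement above to hold. *)

(* Defs.v *)
From HB Require Import structures.
From mathcomp Require Import all_boot all_order all_algebra.
From mathcomp Require Import all_classical all_reals.
From mathcomp Require Import topology normedtype sequences exp.
From mathcomp.real_closed Require Import complex mxtens.

Set Implicit Arguments.
Unset Strict Implicit.
Unset Printing Implicit Defensive.

Import Order.TTheory GRing.Theory Num.Theory.
Local Open Scope ring_scope.

Section QITE.
Variable R : realType.
Local Notation C := (R[i]).

Definition adj n k (M : 'M[C]_(n, k)) : 'M[C]_(k, n) := (map_mx conjc M)^T.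

Definition vnorm n (v : 'cV[C]_n) : R :=
  Num.sqrt (\sum_i ((complex.Re (v i 0)) ^+ 2 + (complex.Im (v i 0)) ^+ 2)).

Definition opnorm_le n k (M : 'M[C]_(n, k)) (e : R) : Prop :=
  forall v : 'cV[C]_k, vnorm (M *m v) <= e * vnorm v.

Definition unitary n (U : 'M[C]_n) : Prop := U *m adj U = 1%:M.

Definition ham n (V : 'M[C]_n) (d : 'I_n -> R) : 'M[C]_n :=
  V *m diag_mx (\row_i ((d i)%:C)%C) *m adj V.

Definition lmin n (d : 'I_n.+1 -> R) : R := \big[Num.min/d ord0]_i d i.

(* F_b(H) = exp(-b (H - lambda_min 1)), by functional calculus *)
Definition Fb n (V : 'M[C]_n.+1) (d : 'I_n.+1 -> R) (b : R) : 'M[C]_n.+1 :=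
  V *m diag_mx (\row_i ((expR (- b * (d i - lmin d)))%:C)%C) *m adj V.

Definition pPsi n (V : 'M[C]_n.+1) (d : 'I_n.+1 -> R) (psi : 'cV[C]_n.+1) (b : R) : R :=
  vnorm (Fb V d b *m psi) ^+ 2.

(* <0| U |0> for U acting on system (dim n) (x) ancillas (dim m.+1) *)
Definition sysblock n m (U : 'M[C]_(n * m.+1)) : 'M[C]_n :=
  \matrix_(i, j) U (mxtens_index (i, ord0)) (mxtens_index (j, ord0)).

Definition block_encoding n m (U : 'M[C]_(n * m.+1)) (A : 'M[C]_n) (eps alpha : R) : Prop :=
  unitary U /\ opnorm_le ((alpha%:C)%C *: A - sysblock U) eps.

Definition normalize n (v : 'cV[C]_n) : 'cV[C]_n := ((vnorm v)^-1%:C)%C *: v.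

(* state of the system (conditioned on success so far) before primitive k
   (0-indexed) within one attempt of the fragmented algorithm *)
Fixpoint run_state n (A : nat -> 'M[C]_n) (psi : 'cV[C]_n) (k : nat) : 'cV[C]_n :=
  match k with
  | 0 => psi
  | k'.+1 => normalize (A k' *m run_state A psi k')
  end.

(* Born-rule probability that the ancilla measurement after primitive k
   yields |0>, given that primitive k is applied *)
Definition succ_prob n (A : nat -> 'M[C]_n) (psi : 'cV[C]_n) (k : nat) : R :=
  vnorm (A k *m run_state A psi k) ^+ 2.

(* probability that, within one attempt, primitives 0..l-1 all succeed
   (i.e. primitive l is run) *)
Definition reach_prob n (A : nat -> 'M[C]_n) (psi : 'cV[C]_n) (l : nat) : R :=
  \prod_(k < l) succ_prob A psi k.

Definition dm n (v : 'cV[C]_n) : 'M[C]_n := v *m adj v.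

Definition projector n (P : 'M[C]_n) : Prop := P *m P = P /\ adj P = P.

(* trace distance D(rho, sigma) = max_{P projector} tr(P (rho - sigma)) <= e *)
Definition tdist_le n (rho sigma : 'M[C]_n) (e : R) : Prop :=
  forall P : 'M[C]_n, projector P -> \tr (P *m (rho - sigma)) <= (e%:C)%C.

End QITE.

(* Main.v *)
Require Import Defs.
From HB Require Import structures.
From mathcomp Require Import all_boot all_order all_algebra.
From mathcomp Require Import all_classical all_reals.
From mathcomp Require Import topology normedtype sequences exp.
From mathcomp.real_closed Require Import complex mxtens.
From mathcomp Require Import lra ring.
Set Implicit Arguments.
Unset Strict Implicit.
Unset Printing Implicit Defensive.
Import Order.TTheory GRing.Theory Num.Theory numFieldNormedType.Exports.
Local Open Scope ring_scope.

Section Aux.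
Variable R : realType.
Local Notation C := (R[i]).

Lemma ReD (u v : C) : complex.Re (u + v) = complex.Re u + complex.Re v.
Proof. by case: u; case: v. Qed.
Lemma ImD (u v : C) : complex.Im (u + v) = complex.Im u + complex.Im v.
Proof. by case: u; case: v. Qed.
Lemma ReN (u : C) : complex.Re (- u) = - complex.Re u.
Proof. by case: u. Qed.
Lemma ImN (u : C) : complex.Im (- u) = - complex.Im u.
Proof. by case: u. Qed.
Lemma ReRM (c : R) (u : C) : complex.Re ((c%:C)%C * u) = c * complex.Re u.
Proof. case: u => a b /=. ring. Qed.
Lemma ImRM (c : R) (u : C) : complex.Im ((c%:C)%C * u) = c * complex.Im u.
Proof. case: u => a b /=. ring. Qed.
Lemma ReJM (u v : C) : complex.Re ((u^*)%C * v) = complex.Re u * complex.Re v + complex.Im u * complex.Im v.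
Proof. case: u => a b; case: v => c d /=. ring. Qed.
Lemma JMself (u : C) : ((u^*)%C * u) = ((complex.Re u ^+ 2 + complex.Im u ^+ 2)%:C)%C.
Proof. case: u => a b /=. apply/eqP; rewrite eq_complex /=; apply/andP; split; apply/eqP; ring. Qed.
Lemma adjE n k (M : 'M[C]_(n, k)) i j : adj M i j = ((M j i)^*)%C.
Proof. by rewrite /adj !mxE. Qed.

Lemma adjM a b c (A : 'M[C]_(a, b)) (B : 'M[C]_(b, c)) : adj (A *m B) = adj B *m adj A.
Proof.
apply/matrixP=> i j; rewrite !adjE !mxE rmorph_sum; apply: eq_bigr => k _.
by rewrite !adjE rmorphM mulrC.
Qed.

Lemma adjD a b (A B : 'M[C]_(a, b)) : adj (A + B) = adj A + adj B.
Proof. by rewrite /adj; apply/matrixP=> i j; rewrite !mxE rmorphD. Qed.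

Lemma adjN a b (A : 'M[C]_(a, b)) : adj (- A) = - adj A.
Proof. by rewrite /adj; apply/matrixP=> i j; rewrite !mxE rmorphN. Qed.

Lemma adjB a b (A B : 'M[C]_(a, b)) : adj (A - B) = adj A - adj B.
Proof. by rewrite adjD adjN. Qed.

Lemma adjZ a b (c : C) (A : 'M[C]_(a, b)) : adj (c *: A) = (c^*)%C *: adj A.
Proof. by rewrite /adj; apply/matrixP=> i j; rewrite !mxE rmorphM. Qed.

Lemma adjK a b (A : 'M[C]_(a, b)) : adj (adj A) = A.
Proof. by apply/matrixP=> i j; rewrite !adjE conjcK. Qed.

Lemma adj1 a : adj (1%:M : 'M[C]_a) = 1%:M.
Proof. by rewrite /adj; apply/matrixP=> i j; rewrite !mxE rmorphMn rmorph1 eq_sym. Qed.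

Lemma unitaryC a (U : 'M[C]_a) : unitary U -> adj U *m U = 1%:M.
Proof. by move=> /mulmx1C. Qed.

Definition nrm2 n (x : 'cV[C]_n) : R :=
  \sum_i ((complex.Re (x i 0)) ^+ 2 + (complex.Im (x i 0)) ^+ 2).
Definition rip n (x y : 'cV[C]_n) : R :=
  \sum_i (complex.Re (x i 0) * complex.Re (y i 0) + complex.Im (x i 0) * complex.Im (y i 0)).

Lemma vnormE n (x : 'cV[C]_n) : vnorm x = Num.sqrt (nrm2 x).
Proof. by []. Qed.

Lemma nrm2_ge0 n (x : 'cV[C]_n) : 0 <= nrm2 x.
Proof. by apply: sumr_ge0 => i _; rewrite addr_ge0 // sqr_ge0. Qed.

Lemma vnorm_ge0 n (x : 'cV[C]_n) : 0 <= vnorm x.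
Proof. exact: sqrtr_ge0. Qed.

Lemma vnorm_sq n (x : 'cV[C]_n) : vnorm x ^+ 2 = nrm2 x.
Proof. by rewrite vnormE sqr_sqrtr // nrm2_ge0. Qed.

Lemma ipE n (x : 'cV[C]_n) : (adj x *m x) 0 0 = ((nrm2 x)%:C)%C.
Proof.
rewrite mxE /nrm2 raddf_sum; apply: eq_bigr => i _.
by rewrite adjE JMself.
Qed.

Lemma ripE n (x y : 'cV[C]_n) : rip x y = complex.Re ((adj x *m y) 0 0).
Proof.
rewrite mxE /rip raddf_sum; apply: eq_bigr => i _.
by rewrite adjE; exact: (esym (ReJM _ _)).
Qed.

Lemma nrm2D n (x y : 'cV[C]_n) : nrm2 (x + y) = nrm2 x + nrm2 y + 2 * rip x y.
Proof.
rewrite /nrm2 /rip mulr_sumr -!big_split /=; apply: eq_bigr => i _.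
rewrite !mxE ReD ImD; ring.
Qed.

Lemma nrm2N n (x : 'cV[C]_n) : nrm2 (- x) = nrm2 x.
Proof. by rewrite /nrm2; apply: eq_bigr => i _; rewrite !mxE ReN ImN !sqrrN. Qed.

Lemma nrm2Z n (c : R) (x : 'cV[C]_n) : nrm2 ((c%:C)%C *: x) = c ^+ 2 * nrm2 x.
Proof.
rewrite /nrm2 mulr_sumr; apply: eq_bigr => i _.
rewrite !mxE ReRM ImRM; ring.
Qed.

Lemma nrm2_eq0 n (x : 'cV[C]_n) : nrm2 x = 0 -> x = 0.
Proof.
move=> /eqP; rewrite psumr_eq0 => [/allP H|i _]; last by rewrite addr_ge0 // sqr_ge0.
apply/matrixP=> i j; rewrite (ord1 j) mxE.
have /H : i \in index_enum 'I_n by rewrite mem_index_enum.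
rewrite /= paddr_eq0 ?sqr_ge0 // !sqrf_eq0 => /andP[/eqP h1 /eqP h2].
by move: (x i 0) h1 h2 => [a b] /= -> ->.
Qed.

Lemma vnorm_eq0 n (x : 'cV[C]_n) : vnorm x = 0 -> x = 0.
Proof.
move=> h; apply: nrm2_eq0; rewrite -vnorm_sq h; by rewrite expr0n.
Qed.

Lemma vnorm0 n : vnorm (0 : 'cV[C]_n) = 0.
Proof.
rewrite vnormE /nrm2 big1 ?sqrtr0 // => i _; rewrite mxE /=; by rewrite expr0n /= addr0.
Qed.

Lemma CS n (x y : 'cV[C]_n) : rip x y ^+ 2 <= nrm2 x * nrm2 y.
Proof.
have Q t : 0 <= nrm2 x - 2 * t * rip x y + t ^+ 2 * nrm2 y.
  have -> : nrm2 x - 2 * t * rip x y + t ^+ 2 * nrm2 y = nrm2 (x + (- t)%:C%C *: y).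
    rewrite nrm2D nrm2Z /rip mulr_sumr mulr_sumr.
    have -> : \sum_i (2 * t * (complex.Re (x i 0) * complex.Re (y i 0) + complex.Im (x i 0) * complex.Im (y i 0))) = - \sum_i (2 * (complex.Re (x i 0) * complex.Re ((((- t)%:C)%C *: y) i 0) + complex.Im (x i 0) * complex.Im ((((- t)%:C)%C *: y) i 0))).
      rewrite -sumrN; apply: eq_bigr => i _; rewrite !mxE ReRM ImRM; ring.
    ring.
  exact: nrm2_ge0.
have [y0|ypos] := eqVneq (nrm2 y) 0.
  have -> : y = 0 by apply: nrm2_eq0.
  rewrite /rip big1 ?expr0n /= ?mulr_ge0 ?nrm2_ge0 // => i _; rewrite mxE /=; ring.
have yp : 0 < nrm2 y by rewrite lt_def ypos nrm2_ge0.
have := Q (rip x y / nrm2 y).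
set r := rip x y; set a := nrm2 x; set b := nrm2 y => h.
have : 0 <= (a - 2 * (r / b) * r + (r / b) ^+ 2 * b) * b by rewrite mulr_ge0 // ltW.
have -> : (a - 2 * (r / b) * r + (r / b) ^+ 2 * b) * b = a * b - r ^+ 2.
  by field; rewrite gt_eqF.
by rewrite subr_ge0.
Qed.

Lemma rip_le n (x y : 'cV[C]_n) : rip x y <= vnorm x * vnorm y.
Proof.
rewrite !vnormE -sqrtrM ?nrm2_ge0 //.
apply: (le_trans (ler_norm _)); rewrite -sqrtr_sqr.
by rewrite ler_sqrt ?CS // mulr_ge0 ?nrm2_ge0.
Qed.

Lemma vnormD n (x y : 'cV[C]_n) : vnorm (x + y) <= vnorm x + vnorm y.
Proof.
rewrite -(ger0_norm (addr_ge0 (vnorm_ge0 x) (vnorm_ge0 y))) -sqrtr_sqr.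
rewrite {1}vnormE ler_sqrt ?sqr_ge0 // nrm2D sqrrD !vnorm_sq.
have := rip_le x y; rewrite -mulr_natl; lra.
Qed.

Lemma vnormN n (x : 'cV[C]_n) : vnorm (- x) = vnorm x.
Proof. by rewrite !vnormE nrm2N. Qed.

Lemma vnormB n (x y : 'cV[C]_n) : vnorm (x - y) <= vnorm x + vnorm y.
Proof. by rewrite -(vnormN y) vnormD. Qed.

Lemma vnormZ n (c : R) (x : 'cV[C]_n) : vnorm ((c%:C)%C *: x) = `|c| * vnorm x.
Proof. by rewrite !vnormE nrm2Z sqrtrM ?sqr_ge0 // sqrtr_sqr. Qed.

Lemma vnorm_unitary a (U : 'M[C]_a) x : unitary U -> vnorm (U *m x) = vnorm x.
Proof.
move=> /unitaryC hU; rewrite !vnormE; congr Num.sqrt; apply: complexI.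
by rewrite -!ipE adjM -mulmxA (mulmxA (adj U)) hU mul1mx.
Qed.

Lemma sum_tens (V : zmodType) a b (F : 'I_(a * b) -> V) :
  \sum_k F k = \sum_(i < a) \sum_(j < b) F (mxtens_index (i, j)).
Proof.
rewrite pair_bigA /= (reindex (@mxtens_index a b)) /=; last first.
  by exists (@mxtens_unindex a b) => k _; [apply: mxtens_indexK | apply: mxtens_unindexK].
by apply: eq_bigr => -[i j].
Qed.

Definition emb a b (x : 'cV[C]_a) : 'cV[C]_(a * b.+1) :=
  \col_k (if (mxtens_unindex k).2 == ord0 then x (mxtens_unindex k).1 0 else 0).

Lemma sysblock_mul a b (U : 'M[C]_(a * b.+1)) (x : 'cV_a) i :
  (sysblock U *m x) i 0 = (U *m emb b x) (mxtens_index (i, ord0)) 0.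
Proof.
rewrite !mxE sum_tens; apply: eq_bigr => j _.
rewrite (bigD1 ord0) //= big1 ?addr0.
  by rewrite !mxE mxtens_indexK eqxx.
by move=> k /negbTE nk; rewrite !mxE mxtens_indexK /= nk mulr0.
Qed.

Lemma nrm2_emb a b (x : 'cV[C]_a) : nrm2 (emb b x) = nrm2 x.
Proof.
rewrite /nrm2 sum_tens; apply: eq_bigr => i _.
rewrite (bigD1 ord0) //= big1 ?addr0.
  by rewrite !mxE mxtens_indexK eqxx.
by move=> k /negbTE nk; rewrite !mxE mxtens_indexK /= nk expr0n /= addr0.
Qed.

Lemma nrm2_unitary a (U : 'M[C]_a) x : unitary U -> nrm2 (U *m x) = nrm2 x.
Proof.
move=> /unitaryC hU; apply: complexI.
by rewrite -!ipE adjM -mulmxA (mulmxA (adj U)) hU mul1mx.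
Qed.

Lemma sysblock_contr a b (U : 'M[C]_(a * b.+1)) : unitary U -> opnorm_le (sysblock U) 1.
Proof.
move=> hU x; rewrite mul1r !vnormE ler_sqrt ?nrm2_ge0 //.
rewrite -(nrm2_emb b x) -(nrm2_unitary (emb b x) hU).
rewrite /nrm2 [X in _ <= X]sum_tens; apply: ler_sum => i _.
rewrite (bigD1 ord0) //= sysblock_mul lerDl.
by apply: sumr_ge0 => k _; rewrite addr_ge0 // sqr_ge0.
Qed.

Lemma proj_contr a (P : 'M[C]_a) x : projector P -> nrm2 (P *m x) <= nrm2 x.
Proof.
move=> [hPP hPa].
have -> : nrm2 x = nrm2 (P *m x) + nrm2 (x - P *m x) + 2 * rip (P *m x) (x - P *m x).
  by rewrite -nrm2D addrC subrK.
have -> : rip (P *m x) (x - P *m x) = 0.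
  rewrite ripE adjM hPa mulmxBr -(mulmxA _ P (P *m x)) (mulmxA P P) hPP mulmxA subrr mxE.
  by [].
by rewrite mulr0 addr0 lerDl nrm2_ge0.
Qed.

Lemma vnorm_proj a (P : 'M[C]_a) x : projector P -> vnorm (P *m x) <= vnorm x.
Proof. by move=> hP; rewrite !vnormE ler_sqrt ?nrm2_ge0 ?proj_contr. Qed.

Lemma tr_proj a (P : 'M[C]_a) x : projector P -> \tr (P *m dm x) = ((nrm2 (P *m x))%:C)%C.
Proof.
move=> [hPP hPa].
rewrite /dm mulmxA mxtrace_mulC -ipE adjM hPa /mxtrace big_ord1.
by rewrite -!mulmxA (mulmxA P P) hPP.
Qed.

Lemma opnorm_contr a (A : 'M[C]_a) x : opnorm_le A 1 -> vnorm (A *m x) <= vnorm x.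
Proof. by move=> h; rewrite -[X in _ <= X]mul1r h. Qed.

Lemma normalize_scale a (c : R) (y : 'cV[C]_a) : 0 < c -> normalize ((c%:C)%C *: y) = normalize y.
Proof.
move=> c0; rewrite /normalize vnormZ gtr0_norm // scalerA -rmorphM invfM.
by rewrite mulrAC mulVf ?mul1r // gt_eqF.
Qed.

Lemma vnorm_normalize a (y : 'cV[C]_a) : y != 0 -> vnorm (normalize y) = 1.
Proof.
move=> y0; have hy : vnorm y != 0 by apply: contra y0 => /eqP /vnorm_eq0 ->.
by rewrite /normalize vnormZ ger0_norm ?invr_ge0 ?vnorm_ge0 // mulVf.
Qed.

Lemma normalize_unit a (y : 'cV[C]_a) : vnorm y = 1 -> normalize y = y.
Proof. by move=> h; rewrite /normalize h invr1 scale1r. Qed.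

Fixpoint vv a (A : nat -> 'M[C]_a) (psi : 'cV[C]_a) (k : nat) : 'cV[C]_a :=
  match k with
  | 0 => psi
  | k'.+1 => A k' *m vv A psi k'
  end.

Lemma vnorm_pos a (y : 'cV[C]_a) : vnorm y != 0 -> 0 < vnorm y.
Proof. by move=> h; rewrite lt_def h vnorm_ge0. Qed.

Lemma run_stateE a (A : nat -> 'M[C]_a) psi k : vnorm psi = 1 ->
  run_state A psi k = normalize (vv A psi k).
Proof.
move=> h1; elim: k => [|k IH] /=; first by rewrite normalize_unit.
rewrite IH; have [h0|hp] := eqVneq (vnorm (vv A psi k)) 0.
  by rewrite (vnorm_eq0 h0) /normalize scaler0 mulmx0.
have -> : normalize (vv A psi k) = ((vnorm (vv A psi k))^-1)%:C%C *: vv A psi k by [].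
by rewrite -scalemxAr normalize_scale // invr_gt0 vnorm_pos.
Qed.

Lemma reach_probE a (A : nat -> 'M[C]_a) psi l : vnorm psi = 1 ->
  reach_prob A psi l = vnorm (vv A psi l) ^+ 2.
Proof.
move=> h1; elim: l => [|l IH]; first by rewrite /reach_prob big_ord0 /= h1 expr1n.
rewrite /reach_prob big_ord_recr /= -/(reach_prob A psi l) IH /succ_prob run_stateE //.
have [h0|hp] := eqVneq (vnorm (vv A psi l)) 0.
  by rewrite h0 (vnorm_eq0 h0) mulmx0 vnorm0 expr0n /= mul0r.
rewrite /normalize -scalemxAr vnormZ ger0_norm ?invr_ge0 ?vnorm_ge0 //.
by rewrite exprMn mulrA -exprMn mulfV // expr1n mul1r.
Qed.

Lemma vv_contr a (A : nat -> 'M[C]_a) psi l k : (forall j, (j < k)%N -> opnorm_le (A j) 1) ->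
  (l <= k)%N -> vnorm (vv A psi k) <= vnorm (vv A psi l).
Proof.
elim: k => [|k IH] hA; first by rewrite leqn0 => /eqP ->.
rewrite leq_eqVlt => /orP[/eqP -> //|]; rewrite ltnS => hl.
have h := IH (fun j hj => hA j (leq_trans hj (leqnSn k))) hl.
by apply: le_trans h; apply: opnorm_contr; apply: hA.
Qed.

Lemma vnorm_dist a (x y : 'cV[C]_a) : `|vnorm x - vnorm y| <= vnorm (x - y).
Proof.
apply/ler_normlP; split.
  have := vnormB x (x - y); rewrite opprB addrC subrK; lra.
have := vnormD (x - y) y; rewrite subrK; lra.
Qed.

Lemma Fb_mul n (V : 'M[C]_n.+1) d a b : unitary V ->
  Fb V d a *m Fb V d b = Fb V d (a + b).
Proof.
move=> hV; rewrite /Fb !mulmxA -(mulmxA _ (adj V) V) (unitaryC hV) mulmx1.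
rewrite -(mulmxA V) mulmx_diag; congr (_ *m _ *m _); congr diag_mx.
apply/rowP => i; rewrite !mxE -rmorphM -expRD; congr (_%:C)%C; congr expR; ring.
Qed.

Lemma Fb0 n (V : 'M[C]_n.+1) d : unitary V -> Fb V d 0 = 1%:M.
Proof.
move=> hV; rewrite /Fb.
have -> : (\row_i ((expR (- 0 * (d i - lmin d)))%:C)%C) = const_mx 1 :> 'rV[C]_n.+1.
  by apply/rowP => i; rewrite !mxE oppr0 mul0r expR0.
by rewrite diag_const_mx mulmx1 hV.
Qed.

Lemma Fb_inj n (V : 'M[C]_n.+1) d b (x : 'cV[C]_n.+1) : unitary V ->
  Fb V d b *m x = 0 -> x = 0.
Proof.
move=> hV h; rewrite -[x]mul1mx -(Fb0 d hV) -(subrr b) addrC -Fb_mul //.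
by rewrite -mulmxA h mulmx0.
Qed.
Lemma scale_mul2 a (c1 c2 : C) (M1 M2 : 'M[C]_a) (x : 'cV[C]_a) :
  (c1 *: M1) *m (c2 *: (M2 *m x)) = (c1 * c2) *: ((M1 *m M2) *m x).
Proof. by rewrite -scalemxAl -scalemxAr scalerA mulmxA. Qed.

Lemma wE n (V : 'M[C]_n.+1) d (alpha dbeta : nat -> R) psi k : unitary V ->
  vv (fun j => ((alpha j)%:C)%C *: Fb V d (dbeta j)) psi k =
  ((\prod_(j < k) alpha j)%:C)%C *: (Fb V d (\sum_(j < k) dbeta j) *m psi).
Proof.
move=> hV; elim: k => [|k IH].
  by rewrite /= big_ord0 big_ord0 Fb0 // mul1mx scale1r.
rewrite [vv _ _ _]/= IH.
rewrite (scale_mul2 ((alpha k)%:C)%C _ (Fb V d (dbeta k))).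
rewrite (Fb_mul _ _ _ hV).
have e1 : \prod_(j < k.+1) alpha j = alpha k * \prod_(j<k) alpha j by rewrite big_ord_recr mulrC.
have e2 : \sum_(j<k.+1) dbeta j = dbeta k + \sum_(j<k) dbeta j by rewrite big_ord_recr addrC.
rewrite e1 e2. congr (_ *: _). by rewrite rmorphM.
Qed.

Lemma err_bound a0 (A W : nat -> 'M[C]_a0) psi r (g : nat -> R) :
  (forall j, (j < r)%N -> opnorm_le (A j) 1) ->
  (forall j, (j < r)%N -> vnorm ((A j - W j) *m vv W psi j) <= g j) ->
  forall k, (k <= r)%N -> vnorm (vv A psi k - vv W psi k) <= \sum_(j < k) g j.
Proof.
move=> hA hg; elim=> [|k IH] hk /=.
  by rewrite big_ord0 subrr vnorm0.
have -> : A k *m vv A psi k - W k *m vv W psi k =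
   A k *m (vv A psi k - vv W psi k) + (A k - W k) *m vv W psi k.
  by rewrite mulmxBr mulmxBl addrA subrK.
rewrite big_ord_recr /=; apply: (le_trans (vnormD _ _)); apply: lerD; last exact: hg.
apply: le_trans (IH (ltnW hk)); exact: opnorm_contr (hA k hk).
Qed.

Lemma sum_pow2 k : \sum_(j < k) (2 : R) ^+ j <= 2 ^+ k.
Proof.
elim: k => [|k IH]; first by rewrite big_ord0 expr0.
by rewrite big_ord_recr /= exprS; lra.
Qed.

Lemma ratio_bound (x y X a e : R) : 0 < a -> 0 < y -> 0 <= e -> e <= 1/8 ->
  `|x - y| <= e * a -> `|X - a| <= e * a -> X <= x ->
  `|x ^+ 2 / X ^+ 2 - y ^+ 2 / a ^+ 2| <= 16 * e * (y ^+ 2 / a ^+ 2).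
Proof.
move=> a0 y0 e0 e1 hxy hXa hX.
case/ler_normlP: (hxy) => h1 h2; case/ler_normlP: (hXa) => h3 h4.
have ea : e * a <= a / 8 by nra.
have Xa : 7 / 8 * a <= X by lra.
have ya : 3 / 4 * a <= y by lra.
have X0 : 0 < X by lra.
have x0 : 0 < x by lra.
have d1 : `|x * a - y * X| <= 7 / 3 * e * a * y.
  have -> : x * a - y * X = (x - y) * a - y * (X - a) by ring.
  apply: (le_trans (ler_normB _ _)); rewrite !normrM (gtr0_norm a0) (gtr0_norm y0).
  have : `|x - y| * a <= e * a * a by rewrite ler_pM2r.
  have : y * `|X - a| <= y * (e * a) by rewrite ler_pM2l.
  nra.
have d2 : 0 <= x * a + y * X <= 3 * y * a by apply/andP; split; nra.
have d3 : `|x ^+ 2 * a ^+ 2 - y ^+ 2 * X ^+ 2| <= 7 * e * a ^+ 2 * y ^+ 2.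
  have -> : x ^+ 2 * a ^+ 2 - y ^+ 2 * X ^+ 2 = (x * a - y * X) * (x * a + y * X) by ring.
  rewrite normrM; case/andP: d2 => d2 d2'; rewrite (ger0_norm d2).
  have := normr_ge0 (x * a - y * X). nra.
have -> : x ^+ 2 / X ^+ 2 - y ^+ 2 / a ^+ 2 = (x ^+ 2 * a ^+ 2 - y ^+ 2 * X ^+ 2) / (X ^+ 2 * a ^+ 2).
  by field; apply/andP; split; rewrite gt_eqF.
rewrite normrM normfV (ger0_norm (mulr_ge0 (sqr_ge0 X) (sqr_ge0 a))).
rewrite ler_pdivrMr ?mulr_gt0 ?exprn_gt0 //.
apply: (le_trans d3).
have : 49 / 64 * a ^+ 2 <= X ^+ 2 by nra.
have -> : 16 * e * (y ^+ 2 / a ^+ 2) * (X ^+ 2 * a ^+ 2) = 16 * e * y ^+ 2 * X ^+ 2.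
  by field; rewrite gt_eqF.
have : 0 <= e * y ^+ 2 by nra.
nra.
Qed.

Lemma pow_ineq0 r : (0 < r)%N -> 1 / (2 * 4 ^+ (r - 1)) <= 1 / 2 ^+ r :> R.
Proof.
case: r => // r _; rewrite subn1 /= ler_pdivrMr ?mulr_gt0 ?exprn_gt0 //.
rewrite mulrC mulrA ler_pdivlMr ?exprn_gt0 // mul1r exprS.
have -> : (4 : R) ^+ r = 2 ^+ r * 2 ^+ r by rewrite -exprMn; congr (_ ^+ _); lra.
have := exprn_ege1 r (ler1n R 2). have := exprn_gt0 r (ltr0n R 2). nra.
Qed.

Lemma pow_ineq j r : (j < r)%N -> 1 / 4 ^+ (r - j) <= 2 ^+ j / 2 ^+ r :> R.
Proof.
move=> hj; rewrite ler_pdivrMr ?exprn_gt0 // mulrAC ler_pdivlMr ?exprn_gt0 // mul1r.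
have -> : (2 : R) ^+ r = 2 ^+ j * 2 ^+ (r - j) by rewrite -exprD subnKC // ltnW.
have -> : (4 : R) ^+ (r - j) = 2 ^+ (r - j) * 2 ^+ (r - j) by rewrite -exprMn; congr (_ ^+ _); lra.
rewrite ler_pM2l ?exprn_gt0 //.
have := exprn_ege1 (r - j) (ler1n R 2). have := exprn_gt0 (r - j) (ltr0n R 2). nra.
Qed.

Lemma tdist_arith (X a e E D : R) : 0 < a -> 7 / 8 * a <= X -> 0 <= e ->
  E <= e * a -> D <= e * a -> X^-1 * E + D / (X * a) * a <= 3 * e.
Proof.
move=> a0 hX e0 hE hD.
have X0 : 0 < X by lra.
have -> : X^-1 * E + D / (X * a) * a = (E + D) / X by field; apply/andP; split; rewrite gt_eqF.
rewrite ler_pdivrMr //; nra.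
Qed.

Lemma hK0_arith (e' e Pr fr f0 P0 pB : R) r : (0 < r)%N -> 0 <= e -> 0 < Pr -> 0 <= fr ->
  f0 = 1 -> P0 = 1 -> pB = fr ^+ 2 ->
  e' <= e * Pr / (2 * 4 ^+ (r - 1)) * Num.sqrt pB -> e' * (P0 * f0) <= e * (Pr * fr) * (2 ^+ 0 / 2 ^+ r).
Proof.
move=> r0 e0 P0' fr0 -> -> -> h; rewrite sqrtr_sqr ger0_norm // in h; rewrite !mulr1 expr0; apply: (le_trans h).
have -> : e * Pr / (2 * 4 ^+ (r - 1)) * fr = e * (Pr * fr) * (1 / (2 * 4 ^+ (r - 1))) by ring.
apply: ler_wpM2l; first by rewrite mulr_ge0 // mulr_ge0 // ltW.
exact: pow_ineq0.
Qed.

Lemma hK1_arith (e' e Pr Pj Q fj fr pB pJ : R) j r : (j < r)%N -> 0 <= e -> 0 < Pj -> 0 < fj -> 0 <= fr ->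
  0 <= Q -> Pr = Pj * Q -> pB = fr ^+ 2 -> pJ = fj ^+ 2 ->
  e' <= e * Q / 4 ^+ (r - j) * Num.sqrt (pB / pJ) -> e' * (Pj * fj) <= e * (Pr * fr) * (2 ^+ j / 2 ^+ r).
Proof.
move=> hj e0 Pj0 fj0 fr0 Q0 -> -> -> h.
rewrite -expr_div_n sqrtr_sqr ger0_norm ?divr_ge0 ?(ltW fj0) // in h.
have hp : 0 <= Pj * fj by rewrite mulr_ge0 // ltW.
apply: (le_trans (ler_wpM2r hp h)).
have -> : e * Q / 4 ^+ (r - j) * (fr / fj) * (Pj * fj) = e * (Pj * Q * fr) * (1 / 4 ^+ (r - j)).
  by field; rewrite expf_neq0 ?gt_eqF // pnatr_eq0.
apply: ler_wpM2l; first by rewrite mulr_ge0 // mulr_ge0 // mulr_ge0 // ltW.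
exact: pow_ineq.
Qed.
Lemma sum_g_bound (c : R) k r : 0 <= c -> (k <= r)%N -> \sum_(j < k) c * (2 ^+ j / 2 ^+ r) <= c.
Proof.
move=> c0 hk; rewrite -mulr_sumr -mulr_suml.
rewrite -[X in _ <= X]mulr1; apply: ler_wpM2l => //.
rewrite ler_pdivrMr ?exprn_gt0 // mul1r; apply: (le_trans (sum_pow2 k)).
by rewrite ler_eXn2l // ltr1n.
Qed.

Lemma geo_ok (X : R) : 0 < X -> X <= 1 -> `|1 - X ^+ 2| < 1.
Proof.
move=> X0 X1; rewrite ger0_norm; first by rewrite ltrBlDr ltrDl exprn_gt0.
rewrite subr_ge0; have := X1; nra.
Qed.

Lemma Xpos_arith (X a e : R) : 0 < a -> 0 <= e -> e <= 1/8 -> `|X - a| <= e * a -> 7 / 8 * a <= X.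
Proof. move=> a0 e0 e1 /ler_normlP[h1 h2]; nra. Qed.

Lemma pos_of (X a : R) : 0 < a -> 7 / 8 * a <= X -> 0 < X.
Proof. move=> a0 h; lra. Qed.

Lemma vnorm_pos_neq0 a0 (y : 'cV[C]_a0) : 0 < vnorm y -> y != 0.
Proof. by move=> h; apply/eqP => h0; move: h; rewrite h0 vnorm0 ltxx. Qed.

Lemma normalize_decomp a0 (v w : 'cV[C]_a0) :
  normalize v - normalize w = (((vnorm v)^-1)%:C)%C *: (v - w) + ((((vnorm v)^-1 - (vnorm w)^-1))%:C)%C *: w.
Proof. by rewrite /normalize scalerBr rmorphB scalerBl addrA subrK. Qed.

Lemma normalize_dist a0 (v w : 'cV[C]_a0) e : 0 < vnorm w -> 7 / 8 * vnorm w <= vnorm v -> 0 <= e ->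
  vnorm (v - w) <= e * vnorm w -> vnorm (normalize v - normalize w) <= 3 * e.
Proof.
move=> w0 hv e0 hvw.
have v0 : 0 < vnorm v by apply: pos_of w0 hv.
rewrite normalize_decomp; apply: (le_trans (vnormD _ _)); rewrite !vnormZ.
have iv : 0 < (vnorm v)^-1 by rewrite invr_gt0.
rewrite (gtr0_norm iv).
have -> : (vnorm v)^-1 - (vnorm w)^-1 = (vnorm w - vnorm v) / (vnorm v * vnorm w).
  by field; rewrite !gt_eqF.
rewrite normrM normfV (gtr0_norm (mulr_gt0 v0 w0)).
apply: tdist_arith => //.
by rewrite distrC; apply: le_trans (vnorm_dist _ _) hvw.
Qed.

Lemma tdist_final a0 (u w : 'cV[C]_a0) (Pm : 'M[C]_a0) e : projector Pm -> vnorm u = 1 -> vnorm w = 1 ->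
  vnorm (u - w) <= 3 * e -> 0 <= e -> \tr (Pm *m (dm u - dm w)) <= (((16 * e)%:C)%C).
Proof.
move=> hP hu hw huw e0.
rewrite mulmxBr linearB /= !tr_proj // -rmorphB lecR -!vnorm_sq.
have h1 : vnorm (Pm *m u) <= 1 by rewrite -hu vnorm_proj.
have h2 : vnorm (Pm *m w) <= 1 by rewrite -hw vnorm_proj.
have h3 : `|vnorm (Pm *m u) - vnorm (Pm *m w)| <= 3 * e.
  apply: (le_trans (vnorm_dist _ _)); rewrite -mulmxBr.
  exact: (le_trans (vnorm_proj _ hP) huw).
have g1 := vnorm_ge0 (Pm *m u); have g2 := vnorm_ge0 (Pm *m w).
move: h1 h2 h3 g1 g2; set x := vnorm (Pm *m u); set y := vnorm (Pm *m w).
move=> h1 h2 /ler_normlP [h3 h4] g1 g2; nra.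
Qed.

Lemma nl_arith (pl pB Q2 Q Pl Pr fl fr wl a : R) : pl = fl ^+ 2 -> pB = fr ^+ 2 -> Q2 = Q ^+ 2 ->
  wl = Pl * fl -> a = Pr * fr -> Pr = Pl * Q -> 0 < Pl -> 0 < fr -> 0 < Q ->
  pl / (pB * Q2) = wl ^+ 2 / a ^+ 2.
Proof.
move=> -> -> -> -> -> -> P0 f0 Q0.
by field; rewrite !gt_eqF.
Qed.

Lemma sum_bound r (N nl : nat -> R) (q : nat -> nat) e : 0 <= e ->
  (forall l, (l < r)%N -> `|N l - nl l| <= 16 * e * nl l) ->
  `|\sum_(l < r) N l * (q l)%:R - \sum_(l < r) nl l * (q l)%:R| <= 16 * e * \sum_(l < r) nl l * (q l)%:R.
Proof.
move=> e0 h; rewrite -sumrB; apply: (le_trans (ler_norm_sum _ _ _)); rewrite mulr_sumr.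
apply: ler_sum => i _; rewrite -mulrBl normrM (ger0_norm (ler0n _ _)) mulrA.
by apply: ler_wpM2r => //; exact: h.
Qed.

End Aux.

Local Open Scope classical_set_scope.
Local Open Scope ring_scope.

Theorem theorem4 (R : realType) :
  exists Cst e0 : R, 0 < Cst /\ 0 < e0 /\
  forall (n : nat) (V : 'M[R[i]]_n.+1) (d : 'I_n.+1 -> R) (psi : 'cV[R[i]]_n.+1)
    (beta eps : R) (r : nat) (dbeta : nat -> R)
    (m : nat -> nat) (U : forall l : nat, 'M[R[i]]_(n.+1 * (m l).+1))
    (eps' alpha : nat -> R) (q : nat -> nat),
  unitary V -> opnorm_le (ham V d) 1 ->
  vnorm psi = 1 ->
  0 <= beta -> 0 <= eps -> eps <= e0 ->
  (forall l, (l < r)%N -> 0 < dbeta l) ->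
  \sum_(l < r) dbeta l = beta ->
  (forall l, (l < r)%N -> 0 < alpha l) ->
  (forall l, (l < r)%N -> block_encoding (U l) (Fb V d (dbeta l)) (eps' l) (alpha l)) ->
  (forall l, (l < r)%N ->
     eps' l <= (if l == 0%N then
                  eps * \prod_(k < r) alpha k / (2 * 4 ^+ (r - 1))
                    * Num.sqrt (pPsi V d psi beta)
                else
                  eps * \prod_(l <= k < r) alpha k / 4 ^+ (r - l)
                    * Num.sqrt (pPsi V d psi beta / pPsi V d psi (\sum_(k < l) dbeta k)))) ->
  let A := fun l => sysblock (U l) in
  let S := reach_prob A psi r in
  let nl := fun l => pPsi V d psi (\sum_(k < l) dbeta k)
                     / (pPsi V d psi beta * \prod_(l <= k < r) alpha k ^+ 2) in
  (* the algorithm terminates with probability one *)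
  ((fun t : nat => (1 - S) ^+ t) @ \oo --> 0) /\
  (* output state is F_beta(H)|Psi> normalized, up to trace distance O(eps) *)
  tdist_le (dm (run_state A psi r)) (dm (normalize (Fb V d beta *m psi))) (Cst * eps) /\
  (* average number of runs N l of P_l, and average query complexity *)
  exists N : nat -> R,
    (forall l, (l < r)%N ->
       series (fun t : nat => (1 - S) ^+ t * reach_prob A psi l) @ \oo --> N l /\
       `|N l - nl l| <= Cst * eps * nl l) /\
    `|\sum_(l < r) N l * (q l)%:R - \sum_(l < r) nl l * (q l)%:R|
      <= Cst * eps * \sum_(l < r) nl l * (q l)%:R.
Proof.
exists 16, (1/8); split; first lra; split; first lra.
move=> n V d psi beta eps r dbeta m U eps' alpha q hV hH hpsi hb he0 he1 hdb hsum hal hbe heps A S nl.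
set bl := fun k => \sum_(j < k) dbeta j.
set P := fun k => \prod_(j < k) alpha j.
set F := fun k => Fb V d (bl k) *m psi.
set W := fun j => ((alpha j)%:C)%C *: Fb V d (dbeta j).
have psi0 : psi != 0.
  by apply/eqP => h; move: hpsi; rewrite h vnorm0 => /eqP; rewrite eq_sym oner_eq0.
have hw k : vv W psi k = ((P k)%:C)%C *: F k by exact: wE.
have fpos k : 0 < vnorm (F k).
  apply: vnorm_pos; apply/eqP => /vnorm_eq0 /(Fb_inj hV) h; by rewrite h eqxx in psi0.
have Ppos k : (k <= r)%N -> 0 < P k.
  by move=> hk; apply: prodr_gt0 => i _; apply: hal; exact: leq_trans (ltn_ord i) hk.
have hwn k : (k <= r)%N -> vnorm (vv W psi k) = P k * vnorm (F k).
  by move=> hk; rewrite hw vnormZ gtr0_norm ?Ppos.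
have hblr : bl r = beta := hsum.
set a := vnorm (vv W psi r).
have apos : 0 < a by rewrite /a hwn // mulr_gt0 ?Ppos.
have hAc j : (j < r)%N -> opnorm_le (A j) 1.
  by move=> hj; apply: sysblock_contr; exact: (hbe j hj).1.
have hstep j : (j < r)%N -> vnorm ((A j - W j) *m vv W psi j) <= eps' j * vnorm (vv W psi j).
  move=> hj; have [_ hb'] := hbe j hj.
  by rewrite -vnormN -mulNmx opprB; exact: hb'.
have F0 : vnorm (F 0%N) = 1 by rewrite /F /bl big_ord0 Fb0 // mul1mx.
have pb : pPsi V d psi beta = vnorm (F r) ^+ 2 by rewrite /pPsi /F hblr.
have PQ j : (j <= r)%N -> P r = P j * \prod_(j <= k < r) alpha k.
  by move=> hj; rewrite /P -!(big_mkord xpredT) (big_cat_nat (leq0n j) hj).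
have P0 : P 0%N = 1 by apply: big_ord0.
have pj j : pPsi V d psi (\sum_(k < j) dbeta k) = vnorm (F j) ^+ 2 by reflexivity.
have Qpos j : 0 <= \prod_(j <= k < r) alpha k.
  by rewrite big_nat; apply: prodr_ge0 => k /andP[_ hk]; exact: ltW (hal k hk).
have hK j : (j < r)%N -> eps' j * vnorm (vv W psi j) <= eps * a * (2 ^+ j / 2 ^+ r).
  move=> hj; have := heps j hj.
  rewrite /a (hwn j (ltnW hj)) (hwn r (leqnn r)).
  case: eqP => [-> | /eqP j0] h.
    rewrite -/(P r) in h.
    exact: (hK0_arith (leq_ltn_trans (leq0n j) hj) he0 (Ppos r (leqnn r)) (vnorm_ge0 (F r)) F0 P0 pb h).
  rewrite -/(P r) in h.
  exact: (hK1_arith hj he0 (Ppos j (ltnW hj)) (fpos j) (vnorm_ge0 _) (Qpos j) (PQ j (ltnW hj)) pb (pj j) h).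
have herr k : (k <= r)%N -> vnorm (vv A psi k - vv W psi k) <= eps * a.
  move=> hk.
  have hg j : (j < r)%N -> vnorm ((A j - W j) *m vv W psi j) <= eps * a * (2 ^+ j / 2 ^+ r).
    move=> hj; exact: (le_trans (hstep j hj) (hK j hj)).
  apply: (le_trans (err_bound hAc hg hk)).
  exact: (sum_g_bound (mulr_ge0 he0 (ltW apos)) hk).
pose X := vnorm (vv A psi r).
have hXa : `|X - a| <= eps * a.
  exact: (le_trans (vnorm_dist _ _) (herr r (leqnn r))).
have hX1 : X <= 1.
  have h := vv_contr psi hAc (leq0n r).
  apply: (le_trans h); rewrite /= hpsi; exact: lexx.
have Xpos : 7 / 8 * a <= X.
  exact: (Xpos_arith apos he0 he1 hXa).
have X0 : 0 < X.
  exact: (pos_of apos Xpos).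
have hS : S = X ^+ 2 by exact: reach_probE.
have hz : `|1 - S| < 1.
  rewrite hS; exact: geo_ok.
split.
  have E : geometric 1 (1 - S) = (fun t => (1 - S) ^+ t).
    apply/funext => t; rewrite /geometric /=; exact: mul1r.
  have := cvg_geometric 1 hz; rewrite E; move=> h; exact: h.
have hu0 : vv A psi r != 0 by exact: (vnorm_pos_neq0 X0).
have hw0 : vv W psi r != 0 by exact: (vnorm_pos_neq0 apos).
split.
  have Fr : F r = Fb V d beta *m psi.
    rewrite /F -hblr; reflexivity.
  have hn : normalize (Fb V d beta *m psi) = normalize (vv W psi r).
    rewrite hw (normalize_scale _ (Ppos r (leqnn r))) Fr; reflexivity.
  rewrite hn (@run_stateE R _ A psi r hpsi).
  move=> Pm hPm.
  exact: (tdist_final hPm (vnorm_normalize hu0) (vnorm_normalize hw0)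
           (normalize_dist apos Xpos he0 (herr r (leqnn r))) he0).
have Qgt j : (j <= r)%N -> 0 < \prod_(j <= k < r) alpha k.
  by move=> hj; rewrite big_nat; apply: prodr_gt0 => k /andP[_ hk]; exact: (hal k hk).
have hwpos l : (l <= r)%N -> 0 < vnorm (vv W psi l).
  move=> hl; rewrite (hwn l hl); exact: (mulr_gt0 (Ppos l hl) (fpos l)).
have hN : forall l, (l < r)%N ->
    series (fun t : nat => (1 - S) ^+ t * reach_prob A psi l) @ \oo --> reach_prob A psi l / S /\
    `|reach_prob A psi l / S - nl l| <= 16 * eps * nl l.
  move=> l hl; split.
    have E : geometric (reach_prob A psi l) (1 - S) = (fun t => (1 - S) ^+ t * reach_prob A psi l).
      apply/funext => t; rewrite /geometric /=; exact: mulrC.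
    have E2 : 1 - (1 - S) = S := subKr 1 S.
    have := cvg_geometric_series (a := reach_prob A psi l) hz.
    rewrite E E2; move=> h; exact: h.
  rewrite (@reach_probE R _ A psi l hpsi) hS.
  have Q2E : \prod_(l <= k < r) alpha k ^+ 2 = (\prod_(l <= k < r) alpha k) ^+ 2 by exact: prodrXl.
  have nlE : nl l = vnorm (vv W psi l) ^+ 2 / a ^+ 2.
    exact: (nl_arith (pj l) pb Q2E (hwn l (ltnW hl)) (hwn r (leqnn r)) (PQ l (ltnW hl))
              (Ppos l (ltnW hl)) (fpos r) (Qgt l (ltnW hl))).
  rewrite nlE.
  exact: (ratio_bound apos (hwpos l (ltnW hl)) he0 he1
           (le_trans (vnorm_dist _ _) (herr l (ltnW hl))) hXa (vv_contr psi hAc (ltnW hl))).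
exists (fun l => reach_prob A psi l / S); split.
  exact: hN.
exact: (sum_bound q he0 (fun l hl => (hN l hl).2)).
Qed.
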